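(* Assume Hypothesis 1 (stated in the context). Then $\mathrm{soc}(X/K)\ne\mathrm{Alt}_m$.
   Context: $H(m,2)$: vertex set $\mathbb F_2^m$, coordinates indexed by a set $M$, $|M|=m$; $d$ Hamming distance. For a code $C$: covering radius $\rho$, $C_i=\{\alpha:d(\alpha,C)=i\}$. $\mathrm{Aut}(H(m,2))=B\rtimes L$, $B\cong\mathbb Z_2^m$ translations, $L\cong\mathrm{Sym}(M)$; $\mathrm{Aut}(C)$ is the setwise stabiliser of $C$; $C$ is completely transitive if $\mathrm{Aut}(C)$ is transitive on each of $C,C_1,\dots,C_\rho$. For a linear code $D$, $T_D$ is the group of translations by elements of $D$. For $C\ni\mathbf 0$, the maximal linear subcode $C_{\max}$ is the largest linear subcode $D\subseteq C$ with $T_D\le\mathrm{Aut}(C)$. Hypothesis 1: $C$ is a completely transitive code in $H(m,2)$ with $\mathbf 0\in C$ and minimum distance $\delta\ge5$; $X=\mathrm{Aut}(C)$; $C_{\max}$ the maximal linear subcode; $X_{\max}$ the setwise stabiliser of $C_{\max}$ in $X$; $2\le\dim C_{\max}\le m-2$. $K=X\cap B$ is the kernel of the action of $X$ on $M$, so $X/K$ is regarded as a permutation group on $M$; $\mathrm{soc}$ denotes the socle (product of all minimal normal subgroups). *)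

(* Defs.v *)
From HB Require Import structures.
From mathcomp Require Import all_boot all_order all_algebra all_fingroup all_solvable.
Set Implicit Arguments. Unset Strict Implicit. Unset Printing Implicit Defensive.
Import GRing.Theory.
Local Open Scope ring_scope.

(* Vertices of H(m,2): row vectors F_2^m; coordinate set M = 'I_m. *)
Definition vert (m : nat) := 'rV['F_2]_m.

Definition hdist m (x y : vert m) : nat := #|[set i : 'I_m | x 0 i != y 0 i]|.

Definition pvec m (s : {perm 'I_m}) (x : vert m) : vert m :=
  \row_i x 0 ((s^-1)%g i).

(* Aut(H(m,2)) = B x| L : maps x |-> x^s + b. *)
Definition hamAut m : {set {perm vert m}} :=
  [set g : {perm vert m} | [exists s : {perm 'I_m}, [exists b : vert m,
            [forall x, g x == pvec s x + b]]]].

Definition translB m : {set {perm vert m}} :=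
  [set g : {perm vert m} | [exists b : vert m, [forall x, g x == x + b]]].

Definition AutC m (C : {set vert m}) : {set {perm vert m}} :=
  [set g in hamAut m | g @: C == C].

(* d(x, C) (C nonempty; m is an upper bound for all distances). *)
Definition dist_to m (x : vert m) (C : {set vert m}) : nat :=
  \big[minn/m]_(c in C) hdist x c.

Definition covrad m (C : {set vert m}) : nat := \max_(x : vert m) dist_to x C.

Definition Cdist m (C : {set vert m}) (i : nat) : {set vert m} :=
  [set x | dist_to x C == i].

Definition completely_transitive m (C : {set vert m}) : Prop :=
  forall i, (i <= covrad C)%N ->
    forall x y, x \in Cdist C i -> y \in Cdist C i ->
      exists2 g, g \in AutC C & g x = y.

Definition min_dist_ge m (C : {set vert m}) (d : nat) : Prop :=
  forall c c', c \in C -> c' \in C -> c != c' -> (d <= hdist c c')%N.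

Definition linear_code m (D : {set vert m}) : Prop :=
  0 \in D /\ (forall x y, x \in D -> y \in D -> x + y \in D).

Definition transl_in_Aut m (D C : {set vert m}) : Prop :=
  forall d, d \in D -> [set x + d | x in C] = C.

Definition is_Cmax m (C D : {set vert m}) : Prop :=
  [/\ linear_code D, D \subset C, transl_in_Aut D C &
      forall D', linear_code D' -> D' \subset C -> transl_in_Aut D' C ->
                 D' \subset D].

Definition code_dim m (D : {set vert m}) : nat := logn 2 #|D|.

(* X/K regarded as a permutation group on M: the permutations of M
   induced by elements of X (K = X :&: B is the kernel of this action). *)
Definition coord_image m (X : {set {perm vert m}}) : {set {perm 'I_m}} :=
  [set s : {perm 'I_m} | [exists g in X, [exists b : vert m, [forall x, g x == pvec s x + b]]]].

Definition socle (gT : finGroupType) (G : {set gT}) : {set gT} :=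
  <<\bigcup_(N : {group gT} | (N \subset G) && minnormal N G) N>>%g.

(* Main.v *)
Require Import Defs.
From HB Require Import structures.
From mathcomp Require Import all_boot all_order all_algebra all_fingroup all_solvable.
From mathcomp Require Import zify.
Import GRing.Theory.
Local Open Scope ring_scope.
Lemma F2cases (c : 'F_2) : c = 0 \/ c = 1.
Proof. case: c => [[|[|k]]] H; [left|right|by []]; exact/val_inj. Qed.
Lemma F2addxx (c : 'F_2) : c + c = 0.
Proof. by case: (F2cases c) => ->; apply/val_inj. Qed.

Section S.
Variable m : nat.
Implicit Types (x y : vert m) (s t : {perm 'I_m}).

Lemma vaddxx x : x + x = 0.
Proof. by apply/matrixP => i j; rewrite !mxE F2addxx. Qed.
Lemma voppx x : - x = x.
Proof. by rewrite -[RHS]subr0 -(vaddxx x) opprD addrA subrr add0r. Qed.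

Lemma pvecD s x y : pvec s (x + y) = pvec s x + pvec s y.
Proof. by apply/matrixP => i j; rewrite !mxE. Qed.
Lemma pvec0 s : pvec s 0 = 0.
Proof. by apply/matrixP => i j; rewrite !mxE. Qed.
Lemma pvec1 x : pvec 1 x = x.
Proof. by apply/matrixP => i j; rewrite !mxE invg1 perm1 [i]ord1. Qed.
Lemma pvecM s t x : pvec (s * t) x = pvec t (pvec s x).
Proof. by apply/matrixP => i j; rewrite !mxE invMg permM. Qed.
Lemma pvec_inj s : injective (pvec s).
Proof.
move=> x y /matrixP H; apply/matrixP => i j; have := H 0 (s j).
by rewrite !mxE permK [i]ord1.
Qed.
Lemma pvec_e s (i : 'I_m) : pvec s ('e_i) = 'e_(s i).
Proof.
apply/matrixP => k j; rewrite !mxE [k]ord1 eqxx /=.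
have -> : (s^-1%g j == i) = (j == s i) by apply/eqP/eqP => [<-|->]; rewrite ?permKV ?permK. by [].
Qed.

Section Lin.
Variable D : {set vert m}.
Hypothesis HD : linear_code D.
Lemma lin0 : 0 \in D. Proof. by case: HD. Qed.
Lemma linD x y : x \in D -> y \in D -> x + y \in D. Proof. by case: HD => _; apply. Qed.
Lemma linZ (c : 'F_2) x : x \in D -> c *: x \in D.
Proof. by case: (F2cases c) => -> Hx; rewrite ?scale0r ?scale1r ?lin0. Qed.
Lemma linsum (I : finType) (F : I -> vert m) : (forall i, F i \in D) -> \sum_i F i \in D.
Proof. move=> H; apply: (big_ind (fun v => v \in D)) => //; [exact: lin0|exact: linD]. Qed.
Hypothesis HA : forall s, s \in ('Alt_('I_m))%g -> forall x, x \in D -> pvec s x \in D.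

Lemma even3 (a b c : 'I_m) : a != b -> a != c -> (tperm a b * tperm a c)%g \in ('Alt_('I_m))%g.
Proof. by move=> ab ac; rewrite Alt_even odd_permM !odd_tperm ab ac. Qed.

Lemma spread (a b c : 'I_m) : a != b -> c != a -> c != b -> 'e_a + 'e_b \in D -> ('e_a + 'e_c : vert m) \in D.
Proof.
move=> ab ca cb H.
have ac : a != c by rewrite eq_sym.
have := HA _ (@even3 a b c ab ac) _ H.
rewrite pvecD !pvec_e !permM tpermL (tpermD ab cb) tpermR tpermL => H2.
have := linD _ _ H H2.
by rewrite addrA -(addrA 'e_a) vaddxx addr0.
Qed.

Lemma allpairs (a b : 'I_m) : a != b -> 'e_a + 'e_b \in D -> forall y : 'I_m, ('e_a + 'e_y : vert m) \in D.
Proof.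
move=> ab H y.
case: (eqVneq y a) => [->|ya]; first by rewrite vaddxx lin0.
case: (eqVneq y b) => [->//|yb].
exact: (@spread a b y ab ya yb H).
Qed.

Lemma cyc (v : vert m) (a b c : 'I_m) : a != b -> c != a -> c != b -> v \in D -> v 0 a = 1 -> v 0 b = 0 ->
  exists2 x : 'I_m, x != a & ('e_a + 'e_x : vert m) \in D.
Proof.
move=> ab ca cb Hv va vb.
have bc : b != c by rewrite eq_sym.
have Hs : (tperm a b * tperm b c)%g \in ('Alt_('I_m))%g by rewrite Alt_even odd_permM !odd_tperm ab bc.
have Hw := linD _ _ Hv (HA _ Hs _ Hv).
have E : v + pvec (tperm a b * tperm b c) v = if v 0 c == 0 then 'e_a + 'e_c else 'e_a + 'e_b.
  apply/matrixP => i j; rewrite [i]ord1 !mxE invMg !tpermV permM.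
  have ba : b != a by rewrite eq_sym.
  have ac : a != c by rewrite eq_sym.
  have ca' : c != a by [].
  case: (F2cases (v 0 c)) => vc; rewrite vc /= !mxE eqxx /=;
  (case: (eqVneq j a) => [->|ja];
    [ by rewrite (tpermD ba ca) tpermL va vb ?(negbTE ac) ?(negbTE ab) /=; apply/val_inj | ]);
  (case: (eqVneq j c) => [->|jc];
    [ by rewrite tpermR tpermR vc va ?(negbTE ca) ?(negbTE cb) /=; apply/val_inj | ]);
  (case: (eqVneq j b) => [->|jb];
    [ by rewrite tpermL (tpermD ac bc) vc vb ?(negbTE ba) ?(negbTE bc) /=; apply/val_inj | ]).
  1,2: have bj : b != j by rewrite eq_sym.
  1,2: have cj : c != j by rewrite eq_sym.
  1,2: have aj : a != j by rewrite eq_sym.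
  1,2: by rewrite (tpermD bj cj) (tpermD aj bj) F2addxx addr0.
case: (F2cases (v 0 c)) E Hw => -> /= -> Hw.
  by exists c => //; rewrite eq_sym.
by exists b => //; rewrite eq_sym.
Qed.

Lemma cover (a : 'I_m) : (forall y : 'I_m, ('e_a + 'e_y : vert m) \in D) ->
  forall x : vert m, x \in D \/ x + 'e_a \in D.
Proof.
move=> Hy x.
pose T := \sum_j x 0 j *: ('e_a + 'e_j : vert m).
have HT : T \in D by apply: linsum => j; apply: linZ.
have ET : T = (\sum_j x 0 j) *: 'e_a + x.
  by rewrite /T (eq_bigr _ (fun j _ => scalerDr _ _ _)) big_split /= -scaler_suml -row_sum_delta.
case: (F2cases (\sum_j x 0 j)) ET => -> ET.
  by left; move: HT; rewrite ET scale0r add0r.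
by right; move: HT; rewrite ET scale1r addrC.
Qed.

Lemma count_cover (a : 'I_m) : (forall x : vert m, x \in D \/ x + 'e_a \in D) ->
  (m - 1 <= logn 2 #|D|)%N.
Proof.
move=> Hc.
have cT : #|[set: vert m]| = (2 ^ m)%N by rewrite cardsT card_mx card_Fp // mul1n.
have m0 : (0 < m)%N := leq_ltn_trans (leq0n a) (ltn_ord a).
case Hea : ('e_a \in D).
  have -> : D = [set: vert m].
    apply/setP => x; rewrite inE; case: (Hc x) => // H.
    by rewrite -[x]addr0 -(vaddxx 'e_a) addrA linD.
  by rewrite cT pfactorK // leq_subr.
pose E := [set y + 'e_a | y in D].
have cE : #|E| = #|D| by rewrite card_imset //; apply: addIr.
have UT : D :|: E = [set: vert m].
  apply/setP => x; rewrite !inE; case: (Hc x) => H; rewrite ?H //.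
  apply/orP; right; apply/imsetP; exists (x + 'e_a) => //.
  by rewrite -addrA vaddxx addr0.
have dis : D :&: E = set0.
  apply/setP => x; rewrite !inE; apply/negP => /andP[Hx /imsetP[y Hy Exy]].
  move: Hea; rewrite Exy in Hx.
  have := linD _ _ Hy Hx; rewrite addrA vaddxx add0r => -> //.
have := cardsU D E; rewrite UT dis cards0 subn0 cT cE addnn => H2.
have -> : #|D| = (2 ^ (m - 1))%N.
  apply/eqP; rewrite -(eqn_pmul2l (isT : (0 < 2)%N)) mul2n -H2 -expnS subn1 prednK //.
by rewrite pfactorK.
Qed.
Lemma alt_big : (3 <= m)%N -> (4 <= #|D|)%N -> (m - 1 <= logn 2 #|D|)%N.
Proof.
move=> m3 D4.
case: (pickP (fun v : vert m => [&& v \in D, v != 0 & v != const_mx 1])); last first.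
  move=> Hn.
  have : D \subset [set 0; const_mx 1].
    apply/subsetP => x Hx; move: (Hn x); rewrite Hx /= !inE.
    by case: (x == 0) => //=; case: (x == const_mx 1).
  move/subset_leq_card; rewrite cards2 => H.
  by move: (leq_trans D4 H); case: (_ != _).
move=> v /and3P[Hv v0 v1].
case: (pickP (fun a => v 0 a == 1)); last first.
  move=> Hn; move/negP: v0; case.
  apply/eqP/matrixP => i j; rewrite [i]ord1 mxE.
  by move: (Hn j); case: (F2cases (v 0 j)) => ->.
move=> a /eqP va.
case: (pickP (fun b => v 0 b == 0)); last first.
  move=> Hn; move/negP: v1; case.
  apply/eqP/matrixP => i j; rewrite [i]ord1 mxE.
  by move: (Hn j); case: (F2cases (v 0 j)) => ->.
move=> b /eqP vb.
have ab : a != b by apply/eqP => Eab; move: va; rewrite Eab vb => /eqP; rewrite eq_sym oner_eq0.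
case: (pickP (fun c => c \notin [set a; b])); last first.
  move=> Hn.
  have : [set: 'I_m] \subset [set a; b] by apply/subsetP => x _; move: (Hn x); rewrite /= => /negbFE.
  move/subset_leq_card; rewrite cardsT card_ord cards2 => Hm.
  by move: (leq_trans m3 Hm); case: (_ != _).
move=> c; rewrite !inE negb_or => /andP[ca cb].
have [x xa Hx] := @cyc v a b c ab ca cb Hv va vb.
have xa' : a != x by rewrite eq_sym.
apply: (@count_cover a); apply: cover.
exact: (@allpairs a x xa' Hx).
Qed.
End Lin.
End S.

Theorem lemma4p1 (m : nat) (C Cmax : {set vert m}) :
  (0 : vert m) \in C ->
  completely_transitive C ->
  min_dist_ge C 5 ->
  is_Cmax C Cmax ->
  (2 <= code_dim Cmax <= m - 2)%N ->
  socle (coord_image (AutC C)) != Alt 'I_m.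
Proof.
move=> C0 _ _ [HlinM HsubM HtrM Hmax] /andP[d2 dm].
apply/negP => /eqP Hsoc.
pose Stab := [set s : {perm 'I_m} | [forall x in Cmax, pvec s x \in Cmax]].
have Sg : group_set Stab.
  apply/group_setP; split.
    by rewrite inE; apply/forall_inP => x Hx; rewrite pvec1.
  move=> s t; rewrite !inE => /forall_inP Hs /forall_inP Ht.
  by apply/forall_inP => x Hx; rewrite pvecM Ht // Hs.
have cI : coord_image (AutC C) \subset Stab.
  apply/subsetP => s; rewrite inE => /existsP[g /andP[gX /existsP[b /forallP Hg]]].
  move: gX; rewrite inE => /andP[_ /eqP gC].
  have HgE : forall x, g x = pvec s x + b by move=> x; apply/eqP.
  pose D' := pvec s @: Cmax.
  have Htr : transl_in_Aut D' C.
    move=> _ /imsetP[d Hd ->].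
    apply/eqP; rewrite eqEcard card_imset ?leqnn ?andbT; last exact: addIr.
    apply/subsetP => _ /imsetP[y Hy ->].
    have : y \in g @: C by rewrite gC.
    case/imsetP => z Hz ->.
    have -> : g z + pvec s d = g (z + d) by rewrite !HgE pvecD addrAC.
    rewrite -gC; apply: imset_f.
    by rewrite -(HtrM d Hd); apply: imset_f.
  have Hlin : linear_code D'.
    split.
      by apply/imsetP; exists 0; rewrite ?pvec0 //; case: HlinM.
    move=> _ _ /imsetP[x Hx ->] /imsetP[y Hy ->].
    by apply/imsetP; exists (x + y); rewrite ?pvecD //; case: HlinM => _; apply.
  have Hsub : D' \subset C.
    apply/subsetP => d Hd; rewrite -(Htr d Hd); apply/imsetP; exists 0 => //.
    by rewrite add0r.
  have := Hmax D' Hlin Hsub Htr => /subsetP HD'.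
  rewrite inE; apply/forall_inP => x Hx; apply: HD'; exact: imset_f.
have AltS : ('Alt_('I_m))%g \subset Stab.
  rewrite -Hsoc /socle.
  rewrite (gen_subG _ (Group Sg)) /=.
  apply/bigcupsP => N /andP[NG _]; exact: subset_trans NG cI.
have HA : forall s, s \in ('Alt_('I_m))%g -> forall x, x \in Cmax -> pvec s x \in Cmax.
  by move=> s /(subsetP AltS); rewrite inE => /forall_inP.
have m3 : (3 <= m)%N by lia.
have C0M : (0 : vert m) \in Cmax by case: HlinM.
have D4 : (4 <= #|Cmax|)%N.
  have Dp : (0 < #|Cmax|)%N by apply/card_gt0P; exists 0.
  have := @pfactor_dvdn 2 2 #|Cmax| isT Dp.
  rewrite [(2 <= _)%N]d2 => H4.
  exact: dvdn_leq Dp H4.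
have := @alt_big m Cmax HlinM HA m3 D4.
rewrite /code_dim in dm.
lia.
Qed.
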